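(* Let $R$ be a compact noetherian local ring with maximal ideal $\mathfrak{m}_R$, $\sigma$ a ring automorphism of $R$ with $\sigma(\mathfrak{m}_R)=\mathfrak{m}_R$, and $\delta$ a $\sigma$-derivation with $\delta(R)\subseteq\mathfrak{m}_R$, $\delta(\mathfrak{m}_R)\subseteq\mathfrak{m}_R^2$. Let $A=R[[Y;\sigma,\delta]]$ and $B=R[Y;\sigma,\delta]\subseteq A$. Let $M$ be a finitely generated $A$-module which is finitely generated as an $R$-module. Then every $B$-submodule $N\subseteq M$ is an $A$-submodule, and every $B$-module quotient of $M$ is an $A$-module quotient.
   Context: A $\sigma$-derivation is an additive map with $\delta(rs)=\delta(r)s+\sigma(r)\delta(s)$. $R[[Y;\sigma,\delta]]$ is the skew power series ring of formal series $\sum r_nY^n$ with multiplication determined by $Yr=\sigma(r)Y+\delta(r)$, and $R[Y;\sigma,\delta]$ the subring of polynomials. *)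

(* Defs.v *)
From HB Require Import structures.
From mathcomp Require Import all_boot all_order all_algebra.
Set Implicit Arguments. Unset Strict Implicit. Unset Printing Implicit Defensive.
Import GRing.Theory.
Local Open Scope ring_scope.

Section SkewDefs.
Variable R : nzRingType.

Inductive addcl (P : R -> Prop) : R -> Prop :=
| addcl0 : addcl P 0
| addclP x : P x -> addcl P x
| addclD x y : addcl P x -> addcl P y -> addcl P (x + y).

Fixpoint mpow (m : R -> Prop) (e : nat) : R -> Prop :=
  match e with
  | 0 => fun _ => True
  | e'.+1 => addcl (fun x => exists a b, [/\ m a, mpow m e' b & x = a * b])
  end.

Definition left_ideal (I : R -> Prop) :=
  [/\ I 0, forall x y, I x -> I y -> I (x + y) & forall r x, I x -> I (r * x)].
Definition right_ideal (I : R -> Prop) :=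
  [/\ I 0, forall x y, I x -> I y -> I (x + y) & forall r x, I x -> I (x * r)].
Definition two_sided_ideal (I : R -> Prop) := left_ideal I /\ right_ideal I.

Definition noetherian :=
  (forall I : nat -> R -> Prop, (forall n, left_ideal (I n)) ->
     (forall n x, I n x -> I n.+1 x) ->
     exists N, forall n x, (N <= n)%N -> I n x -> I N x) /\
  (forall I : nat -> R -> Prop, (forall n, right_ideal (I n)) ->
     (forall n x, I n x -> I n.+1 x) ->
     exists N, forall n x, (N <= n)%N -> I n x -> I N x).

Definition local_with_max_ideal (m : R -> Prop) :=
  [/\ two_sided_ideal m, ~ m 1 &
      forall x, ~ m x -> exists y, x * y = 1 /\ y * x = 1].

Definition madic_open (m : R -> Prop) (U : R -> Prop) :=
  forall x, U x -> exists e, forall y, mpow m e (y - x) -> U y.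

(* R is compact (Hausdorff) for the m-adic topology *)
Definition madic_compact (m : R -> Prop) :=
  (forall (I : Type) (U : I -> R -> Prop),
     (forall i, madic_open m (U i)) -> (forall x, exists i, U i x) ->
     exists (k : nat) (s : 'I_k -> I), forall x, exists j, U (s j) x) /\
  (forall x, (forall e, mpow m e x) -> x = 0).

Definition sigma_derivation (sigma : R -> R) (delta : R -> R) :=
  (forall x y, delta (x + y) = delta x + delta y) /\
  (forall x y, delta (x * y) = delta x * y + sigma x * delta y).

(* formal skew power series sum_n f n Y^n are represented by f : nat -> R *)
Definition series := nat -> R.
Definition polynomial_series (f : series) := exists N, forall n, (N <= n)%N -> f n = 0.
Definition cst (r : R) : series := fun n => if n == 0%N then r else 0.
Definition series_add (f g : series) : series := fun n => f n + g n.

(* Y^n r = sum_k skew_coef n k r Y^k, from Y r = sigma(r) Y + delta(r) *)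
Fixpoint skew_coef (sigma delta : R -> R) (n k : nat) (r : R) : R :=
  match n with
  | 0 => if k == 0%N then r else 0
  | n'.+1 => (if k is k'.+1 then sigma (skew_coef sigma delta n' k' r) else 0)
             + delta (skew_coef sigma delta n' k r)
  end.

(* partial sum (over n < N) of the coefficient of Y^j in
   (sum_n f n Y^n)(sum_i g i Y^i) = sum_{n,i} f n (Y^n g i) Y^i *)
Definition partial_prod sigma delta (f g : series) (N j : nat) : R :=
  \sum_(i < j.+1) \sum_(n < N) f n * skew_coef sigma delta n (j - i) (g i).

(* h is the product f * g in R[[Y;sigma,delta]]: each coefficient is the
   m-adic limit of the partial sums *)
Definition is_skew_prod (m : R -> Prop) sigma delta (f g h : series) :=
  forall j e, exists N0, forall N, (N0 <= N)%N ->
    mpow m e (h j - partial_prod sigma delta f g N j).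

Section Modules.
Variable M : zmodType.

(* a left module over the subring of series satisfying [P]
   (P = all series: A = R[[Y;sigma,delta]]; P = polynomial_series: B = R[Y;sigma,delta]) *)
Definition skew_module_over (P : series -> Prop) (m : R -> Prop) sigma delta
    (act : series -> M -> M) :=
  [/\ forall f x y, P f -> act f (x + y) = act f x + act f y,
      forall f g x, P f -> P g -> act (series_add f g) x = act f x + act g x,
      forall x, act (cst 1) x = x &
      forall f g h x, P f -> P g -> P h -> is_skew_prod m sigma delta f g h ->
        act h x = act f (act g x)].

Definition skew_A_module := skew_module_over (fun _ => True).
Definition skew_B_module := skew_module_over polynomial_series.

Definition fg_over_A (act : series -> M -> M) :=
  exists n (gen : 'I_n -> M), forall x, exists c : 'I_n -> series,
    x = \sum_(i < n) act (c i) (gen i).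
Definition fg_over_R (act : series -> M -> M) :=
  exists n (gen : 'I_n -> M), forall x, exists c : 'I_n -> R,
    x = \sum_(i < n) act (cst (c i)) (gen i).

Definition submodule_over (P : series -> Prop) (act : series -> M -> M)
    (N : M -> Prop) :=
  [/\ N 0, forall x y, N x -> N y -> N (x + y) &
      forall f x, P f -> N x -> N (act f x)].
Definition A_submodule := submodule_over (fun _ => True).
Definition B_submodule := submodule_over polynomial_series.
End Modules.
End SkewDefs.

Arguments polynomial_series {R}.
Arguments cst {R}.
Arguments series_add {R}.
Arguments skew_coef {R}.
Arguments partial_prod {R}.

(* Main.v *)
Require Import Defs.
From HB Require Import structures.
From mathcomp Require Import all_boot all_order all_algebra.
From mathcomp Require Import zify.
From Stdlib Require Import Classical ClassicalEpsilon FunctionalExtensionality.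
Set Implicit Arguments. Unset Strict Implicit. Unset Printing Implicit Defensive.
Import GRing.Theory.
Local Open Scope ring_scope.

Section Mpow.
Variable R : nzRingType.
Variable m : R -> Prop.
Hypothesis Hm : two_sided_ideal m.

Lemma addcl_map (P Q : R -> Prop) (f : R -> R) :
  f 0 = 0 -> (forall x y, f (x + y) = f x + f y) ->
  (forall x, P x -> addcl Q (f x)) -> forall x, addcl P x -> addcl Q (f x).
Proof.
move=> f0 fD fP x; elim=> [|y Py|y z _ IHy _ IHz].
- by rewrite f0; constructor.
- exact: fP.
- by rewrite fD; apply: addclD.
Qed.

Lemma addcl_idem (P : R -> Prop) x : addcl (addcl P) x -> addcl P x.
Proof. by elim=> [|y Py|y z _ IHy _ IHz]; [constructor| |apply: addclD]. Qed.

Lemma mpow0 e : mpow m e 0.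
Proof. by case: e => [|e] //=; constructor. Qed.

Lemma mpowD e x y : mpow m e x -> mpow m e y -> mpow m e (x + y).
Proof. by case: e => [|e] //= ; apply: addclD. Qed.

Lemma m_opp x : m x -> m (- x).
Proof.
case: Hm => [[_ _ HL] _] mx. by rewrite -mulN1r; apply: HL.
Qed.

Lemma mpowN e x : mpow m e x -> mpow m e (- x).
Proof.
case: e => [|e] //=.
apply: (addcl_map (f := fun x => - x)); [by rewrite oppr0 | by move=> ??; rewrite opprD|].
move=> z [a [b [ma mb ->]]]; apply: addclP; exists (- a), b.
by rewrite mulNr; split=> //; apply: m_opp.
Qed.

Lemma mpowB e x y : mpow m e x -> mpow m e y -> mpow m e (x - y).
Proof. by move=> hx hy; apply: mpowD=> //; apply: mpowN. Qed.

Lemma mpow_mulr e x r : mpow m e x -> mpow m e (x * r).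
Proof.
elim: e x => [|e IH] x //=.
apply: (addcl_map (f := fun x => x * r)); [by rewrite mul0r | by move=> ??; rewrite mulrDl|].
move=> z [a [b [ma mb ->]]]; apply: addclP; exists a, (b * r).
by rewrite mulrA; split=> //; apply: IH.
Qed.

Lemma mpow_mull e x r : mpow m e x -> mpow m e (r * x).
Proof.
case: e => [|e] //=.
apply: (addcl_map (f := fun x => r * x)); [by rewrite mulr0 | by move=> ??; rewrite mulrDr|].
move=> z [a [b [ma mb ->]]]; apply: addclP; exists (r * a), b.
case: Hm => [[_ _ HL] _].
by rewrite mulrA; split=> //; apply: HL.
Qed.

Lemma mpowS e x : mpow m e.+1 x -> mpow m e x.
Proof.
elim: e x => [|e IH] x //=.
apply: (addcl_map (f := id)) => //.
move=> z [a [b [ma mb ->]]]; apply: addclP; exists a, b; split=> //.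
exact: IH.
Qed.

Lemma mpow_le e e' x : (e' <= e)%N -> mpow m e x -> mpow m e' x.
Proof.
move/subnK=> <-; elim: (e - e')%N x => [|k IH] x //=.
by move/mpowS; apply: IH.
Qed.

Lemma mpow1 x : m x -> mpow m 1 x.
Proof. by move=> mx; apply: addclP; exists x, 1; rewrite mulr1. Qed.

Lemma mpow1_m x : mpow m 1 x -> m x.
Proof.
case: Hm => [[H0 HD _] [_ _ HR]].
elim=> [|y [a [b [ma _ ->]]]|y z _ IHy _ IHz] //; first exact: HR.
exact: HD.
Qed.

Lemma mpow_mul a b x y : mpow m a x -> mpow m b y -> mpow m (a + b) (x * y).
Proof.
elim: a x => [|a IH] x /=; first by move=> _; apply: mpow_mull.
move=> hx hy; move: x hx.
apply: (addcl_map (f := fun x => x * y)); [by rewrite mul0r | by move=> ??; rewrite mulrDl|].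
move=> z [c [d [mc md ->]]]; apply: addclP; exists c, (d * y).
by rewrite mulrA; split=> //; apply: IH.
Qed.

Lemma mpow_sum e (I : Type) (r : seq I) (F : I -> R) :
  (forall i, mpow m e (F i)) -> mpow m e (\sum_(i <- r) F i).
Proof.
move=> H; elim: r => [|i r IH]; first by rewrite big_nil; apply: mpow0.
by rewrite big_cons; apply: mpowD.
Qed.

Lemma mpow_sumP e (I : Type) (r : seq I) (P : pred I) (F : I -> R) :
  (forall i, P i -> mpow m e (F i)) -> mpow m e (\sum_(i <- r | P i) F i).
Proof.
move=> H; rewrite big_mkcond /=; apply: mpow_sum => i.
by case: ifP => [/H|] // _; apply: mpow0.
Qed.

End Mpow.

Lemma choicef {A B : Type} (P : A -> B -> Prop) :
  (forall a, exists b, P a b) -> exists f : A -> B, forall a, P a (f a).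
Proof.
move=> H; exists (fun a => proj1_sig (constructive_indefinite_description _ (H a))).
by move=> a; apply: proj2_sig.
Qed.


Section Skew.
Variable R : nzRingType.
Variable m : R -> Prop.
Hypothesis Hm : two_sided_ideal m.
Variable sigma : {rmorphism R -> R}.
Variable delta : R -> R.
Hypothesis Hsig : forall x, m x -> m (sigma x).
Hypothesis Hder : sigma_derivation sigma delta.
Hypothesis Hd1 : forall r, m (delta r).
Hypothesis Hd2 : forall r, m r -> mpow m 2 (delta r).

Lemma deltaD x y : delta (x + y) = delta x + delta y.
Proof. by case: Hder. Qed.
Lemma deltaM x y : delta (x * y) = delta x * y + sigma x * delta y.
Proof. by case: Hder. Qed.
Lemma delta0 : delta 0 = 0.
Proof. by apply: (@addrI _ (delta 0)); rewrite -deltaD !addr0. Qed.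
Lemma delta1 : delta 1 = 0.
Proof.
apply: (@addrI _ (delta 1)); rewrite addr0.
by rewrite -{3}(mulr1 1) deltaM rmorph1 mulr1 mul1r.
Qed.

Lemma sigma_mpow e x : mpow m e x -> mpow m e (sigma x).
Proof.
elim: e x => [|e IH] x //= hx; move: x hx.
apply: (addcl_map (f := sigma)); [by rewrite rmorph0 | by move=> ??; rewrite rmorphD|].
move=> w [a [b [ma mb ->]]]; apply: addclP; exists (sigma a), (sigma b).
by rewrite rmorphM; split=> //; [exact: Hsig | exact: IH].
Qed.

Lemma delta_mpow e x : mpow m e x -> mpow m e.+1 (delta x).
Proof.
elim: e x => [|e IH] x; first by move=> _; apply: mpow1.
move=> /= hx; move: x hx.
apply: (addcl_map (f := delta)); [exact: delta0 | exact: deltaD|].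
move=> w [a [b [ma mb ->]]]; rewrite deltaM.
change (mpow m e.+2 (delta a * b + sigma a * delta b)).
apply: (@mpowD _ m e.+2); last first.
  apply: addclP; exists (sigma a), (delta b); split=> //; first exact: Hsig.
  exact: IH.
have -> : e.+2 = (2 + e)%N by rewrite add2n.
by apply: (mpow_mul Hm); first exact: Hd2.
Qed.


Local Notation sk := (skew_coef sigma delta).

Lemma sk_add n k x y : sk n k (x + y) = sk n k x + sk n k y.
Proof.
elim: n k => [|n IH] k /=; first by case: (k == 0%N); rewrite ?addr0.
rewrite IH deltaD; case: k => [|k]; rewrite ?add0r //.
by rewrite IH rmorphD addrACA.
Qed.

Lemma sk_0 n k : sk n k 0 = 0.
Proof. by apply: (@addrI _ (sk n k 0)); rewrite -sk_add !addr0. Qed.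

Lemma sk_1 n k : sk n k 1 = (k == n)%:R.
Proof.
elim: n k => [|n IH] k /=; first by case: (k == 0%N).
case: k => [|k]; rewrite /= !IH ?eqSS;
  [case: (0 == n)%N | case: (k == n); case: (k.+1 == n)];
  by rewrite ?rmorph1 ?rmorph0 ?delta0 ?delta1 ?addr0 ?add0r.
Qed.

Lemma sk_gt n k r : (n < k)%N -> sk n k r = 0.
Proof.
elim: n k => [|n IH] k /=; first by case: k.
case: k => [|k] // lt; rewrite !IH ?rmorph0 ?delta0 ?addr0 //; lia.
Qed.

Lemma sk_mpow e n k r : mpow m e r -> mpow m (e + (n - k)) (sk n k r).
Proof.
move=> hr; elim: n k => [|n IH] k /=.
  case: (k == 0%N); last exact: mpow0.
  by rewrite sub0n addn0.
apply: mpowD.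
  case: k => [|k]; first exact: mpow0.
  by rewrite subSS; apply: sigma_mpow.
apply: (mpow_le (e := (e + (n - k)).+1)); first lia.
exact: delta_mpow.
Qed.

End Skew.


Lemma sum_delta (R : nzRingType) (F : nat -> R) (N a : nat) :
  \sum_(k < N) F k * (k == a :> nat)%:R = if (a < N)%N then F a else 0.
Proof.
rewrite (eq_bigr (fun k : 'I_N => if (k == a :> nat) then F k else 0)).
  by rewrite -big_mkcond big_ord1_eq.
by move=> k _; case: (k == a :> nat); rewrite ?mulr1 ?mulr0.
Qed.

Section Act.
Variable R : nzRingType.
Variable m : R -> Prop.
Variable sigma : {rmorphism R -> R}.
Variable delta : R -> R.
Hypothesis Hder : sigma_derivation sigma delta.
Variable M : zmodType.
Variable act : series R -> M -> M.
Hypothesis Hact : skew_A_module m sigma delta act.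

Local Notation sk := (skew_coef sigma delta).

Definition e_ (n : nat) : series R := fun k => (k == n)%:R.

Lemma actD f x y : act f (x + y) = act f x + act f y.
Proof. by case: Hact => H _ _ _; apply: H. Qed.
Lemma act_add f g x : act (series_add f g) x = act f x + act g x.
Proof. by case: Hact => _ H _ _; apply: H. Qed.
Lemma act1 x : act (cst 1) x = x.
Proof. by case: Hact => _ _ H _; apply: H. Qed.
Lemma act_prod f g h x : is_skew_prod m sigma delta f g h -> act h x = act f (act g x).
Proof. by case: Hact => _ _ _ H; apply: H. Qed.

Lemma act0 f : act f 0 = 0.
Proof. by apply: (@addrI _ (act f 0)); rewrite -actD !addr0. Qed.
Lemma actN f x : act f (- x) = - act f x.
Proof. by apply: (@addrI _ (act f x)); rewrite -actD !subrr act0. Qed.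
Lemma actB f x y : act f (x - y) = act f x - act f y.
Proof. by rewrite actD actN. Qed.
Lemma act_sum f (I : Type) (r : seq I) (P : pred I) (F : I -> M) :
  act f (\sum_(i <- r | P i) F i) = \sum_(i <- r | P i) act f (F i).
Proof.
elim: r => [|i r IH]; first by rewrite !big_nil act0.
by rewrite !big_cons; case: (P i); rewrite ?actD IH.
Qed.
Lemma act_zero x : act (fun _ => 0) x = 0.
Proof.
apply: (@addrI _ (act (fun _ => 0) x)); rewrite addr0 -act_add.
by congr act; apply: functional_extensionality => k; rewrite /series_add addr0.
Qed.
Lemma act_ext f g x : (forall k, f k = g k) -> act f x = act g x.
Proof. by move=> H; congr act; apply: functional_extensionality. Qed.

Lemma exact_prod f g h :
  (forall j, exists N0, forall N, (N0 <= N)%N -> partial_prod sigma delta f g N j = h j) ->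
  is_skew_prod m sigma delta f g h.
Proof.
move=> H j e; have [N0 {}H] := H j; exists N0 => N le; rewrite H // subrr; exact: mpow0.
Qed.

Lemma delta0' : delta 0 = 0.
Proof. by apply: (@addrI _ (delta 0)); case: Hder => D _; rewrite -D !addr0. Qed.

Lemma sk0 n k : sk n k 0 = 0.
Proof.
elim: n k => [|n IH] k /=; first by case: (k == 0%N).
by case: k => [|k]; rewrite !IH ?rmorph0 delta0' ?addr0.
Qed.

Lemma pp_cst b g N j : (0 < N)%N ->
  partial_prod sigma delta (cst b) g N j = b * g j.
Proof.
case: N => // N _; rewrite /partial_prod.
rewrite (eq_bigr (fun i : 'I_j.+1 => b * (if (j - i == 0)%N then g i else 0))).
  rewrite big_ord_recr /= subnn eqxx big1 ?add0r // => i _.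
  have -> : (j - i == 0)%N = false by apply/negbTE; rewrite -lt0n subn_gt0 /=.
  by rewrite mulr0.
move=> i _; rewrite big_ord_recl /= big1 ?addr0 // => k _.
by rewrite /cst /= mul0r.
Qed.

Lemma act_cst b g x : act (fun k => b * g k) x = act (cst b) (act g x).
Proof.
apply: act_prod; apply: exact_prod => j; exists 1%N => N le.
by rewrite pp_cst.
Qed.

Lemma act_cst_cst a b x : act (cst (a * b)) x = act (cst a) (act (cst b) x).
Proof.
rewrite -act_cst; apply: act_ext => k; rewrite /cst.
by case: (k == 0%N); rewrite ?mulr0.
Qed.


Lemma pp_e g n N j : (j < N)%N ->
  partial_prod sigma delta g (e_ n) N j = if (n <= j)%N then g (j - n)%N else 0.
Proof.
move=> ltjN; rewrite /partial_prod.
rewrite (eq_bigr (fun i : 'I_j.+1 => if (i == n :> nat) then g (j - i)%N else 0)).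
  rewrite -big_mkcond. rewrite (big_ord1_eq _ (fun i => g (j - i)%N)) ltnS. by [].
move=> i _; rewrite /e_; case: (i == n :> nat).
  rewrite (eq_bigr (fun k : 'I_N => g k * (k == (j - i)%N :> nat)%:R)).
    by rewrite sum_delta ifT //; apply: leq_ltn_trans ltjN; apply: leq_subr.
  by move=> k _; rewrite sk_1 // eq_sym.
by rewrite big1 // => k _; rewrite sk0 mulr0.
Qed.

Definition shift (f : series R) n : series R := fun k => f (k + n)%N.
Definition trunc (f : series R) n : series R := fun k => if (k < n)%N then f k else 0.

Lemma act_shift g n x :
  act (fun k => if (n <= k)%N then g (k - n)%N else 0) x = act g (act (e_ n) x).
Proof.
apply: act_prod; apply: exact_prod => j; exists j.+1 => N le.
by rewrite pp_e.
Qed.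

Lemma act_ee a b x : act (e_ (a + b)) x = act (e_ a) (act (e_ b) x).
Proof.
rewrite -act_shift; apply: act_ext => k; rewrite /e_.
case: leqP => [le|lt].
  by rewrite (_ : (k - b == a)%N = (k == a + b)%N) //; apply/idP/idP => /eqP H; apply/eqP; lia.
by have -> : (k == a + b)%N = false; [apply/negbTE; lia|].
Qed.

Lemma act_e0 x : act (e_ 0) x = x.
Proof. by rewrite -[RHS]act1; apply: act_ext => k; rewrite /e_ /cst; case: (k == 0%N). Qed.

Lemma act_split f n x :
  act f x = act (trunc f n) x + act (shift f n) (act (e_ n) x).
Proof.
rewrite -act_shift -act_add; apply: act_ext => k.
rewrite /series_add /trunc /shift; case: ltnP => le.
  by rewrite addr0.
by rewrite add0r subnK.
Qed.

Lemma trunc_poly f n : polynomial_series (trunc f n).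
Proof. by exists n => k le; rewrite /trunc ltnNge le. Qed.

Lemma cst_poly (b : R) : polynomial_series (cst b).
Proof. by exists 1%N => k; rewrite /cst; case: k. Qed.

Lemma e_poly n : polynomial_series (e_ n).
Proof. by exists n.+1 => k le; rewrite /e_; have -> : (k == n) = false; [apply/negbTE; lia|]. Qed.


Lemma sum_delta_l (F : nat -> R) (N a : nat) :
  \sum_(k < N) (k == a :> nat)%:R * F k = if (a < N)%N then F a else 0.
Proof.
rewrite -sum_delta; apply: eq_bigr => k _.
by case: (k == a :> nat); rewrite ?mulr1 ?mul1r ?mulr0 ?mul0r.
Qed.

Lemma act_e_cst n r x :
  act (fun k => sk n k r) x = act (e_ n) (act (cst r) x).
Proof.
apply: act_prod; apply: exact_prod => j; exists n.+1 => N le.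
rewrite /partial_prod big_ord_recl /=.
rewrite [X in _ + X](_ : _ = 0); last first.
  apply: big1 => i _; rewrite /e_ (sum_delta_l (fun k => sk k _ _)) /cst /=.
  by case: ifP => // _; rewrite sk0.
by rewrite addr0 /e_ (sum_delta_l (fun k => sk k _ _)) ifT // subn0.
Qed.

Lemma act_poly n h x : (forall k, (n <= k)%N -> h k = 0) ->
  act h x = \sum_(i < n) act (cst (h i)) (act (e_ i) x).
Proof.
elim: n h => [|n IH] h hs.
  by rewrite big_ord0 -(act_zero x); apply: act_ext => k; apply: hs.
rewrite big_ord_recr /=.
have -> : act h x = act (series_add (trunc h n) (fun k => h n * e_ n k)) x.
  apply: act_ext => k; rewrite /series_add /trunc /e_.
  case: (ltngtP k n) => [lt|gt|->]; rewrite ?eqxx ?mulr1 ?add0r ?ltnn //.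
    by rewrite mulr0 addr0.
  by rewrite mulr0 hs.
rewrite act_add act_cst IH; last by move=> k le; rewrite /trunc ltnNge le.
congr (_ + _); apply: eq_bigr => i _; by rewrite /trunc ltn_ord.
Qed.

Lemma act_e_cst_sum n r x :
  act (e_ n) (act (cst r) x) = \sum_(i < n.+1) act (cst (sk n i r)) (act (e_ i) x).
Proof.
rewrite -act_e_cst; apply: act_poly => k lt; apply: sk_gt => //.
Qed.
End Act.


Section Compact.
Variable R : nzRingType.
Variable m : R -> Prop.
Hypothesis Hm : two_sided_ideal m.
Hypothesis Hc : madic_compact m.

Lemma open_ball x e : madic_open m (fun y => mpow m e (y - x)).
Proof.
move=> y hy; exists e => y' hy'.
have -> : y' - x = (y' - y) + (y - x) by rewrite addrA subrK.
exact: mpowD.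
Qed.

Lemma hausdorff x : (forall e, mpow m e x) -> x = 0.
Proof. by case: Hc => _; apply. Qed.

Lemma cluster (u : nat -> R) :
  exists r, forall k N, exists n, (N <= n)%N /\ mpow m k (u n - r).
Proof.
apply: NNPP => H.
have H1 : forall r, exists kN : nat * nat, forall n, (kN.2 <= n)%N -> ~ mpow m kN.1 (u n - r).
  move=> r; apply: NNPP => H2; apply: H; exists r => k N; apply: NNPP => H3.
  apply: H2; exists (k, N) => n le hn; apply: H3; exists n; split.
  - exact: le.
  - exact: hn.
have [f Hf] := choicef H1.
case: Hc => [cov _].
have [k [s Hs]] : exists (k : nat) (s : 'I_k -> R), forall x, exists j, mpow m (f (s j)).1 (x - s j).
  apply: (cov R (fun r y => mpow m (f r).1 (y - r))).
  - by move=> r; apply: open_ball.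
  - by move=> x; exists x; rewrite subrr; apply: mpow0.
have [j Hj] := Hs (u (\max_(j < k) (f (s j)).2)).
apply: (Hf (s j)) Hj.
by apply: (leq_bigmax_cond (F := fun j => (f (s j)).2)).
Qed.

Lemma complete (s : nat -> R) :
  (forall e, exists N0, forall N N', (N0 <= N)%N -> (N <= N')%N -> mpow m e (s N' - s N)) ->
  exists L, forall e, exists N0, forall N, (N0 <= N)%N -> mpow m e (L - s N).
Proof.
move=> Hs; have [r Hr] := cluster s; exists r => e.
have [N0 HN0] := Hs e; exists N0 => N le.
have [n [len hn]] := Hr e N.
have -> : r - s N = - (s n - r) + (s n - s N) by rewrite addrA opprB subrK.
apply: mpowD; first exact: mpowN.
exact: HN0.
Qed.

Lemma incr_ge (phi : nat -> nat) : (forall k, phi k < phi k.+1)%N -> forall k, (k <= phi k)%N.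
Proof.
move=> H; elim=> [|k IH] //; apply: leq_ltn_trans IH _; exact: H.
Qed.

Lemma incr_mono (phi : nat -> nat) : (forall k, phi k < phi k.+1)%N ->
  forall a b, (a < b)%N -> (phi a < phi b)%N.
Proof.
move=> H a b; elim: b => [|b IH] //; rewrite ltnS leq_eqVlt => /orP [/eqP -> //|].
by move=> /IH lt; apply: ltn_trans lt _.
Qed.

Lemma subseq_conv (u : nat -> R) :
  exists (phi : nat -> nat) r, (forall k, phi k < phi k.+1)%N /\
    forall k, mpow m k (u (phi k) - r).
Proof.
have [r Hr] := cluster u.
have [g Hg] := choicef (fun kN : nat * nat => Hr kN.1 kN.2).
pose phi := fix phi k := if k is k'.+1 then g (k, (phi k').+1) else g (0%N, 0%N).
exists phi, r; split.
- by move=> k /=; case: (Hg (k.+1, (phi k).+1)).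
- by case=> [|k] /=; [case: (Hg (0%N, 0%N)) | case: (Hg (k.+1, (phi k).+1))].
Qed.

Lemma tych (U : nat -> nat -> R) (t : nat) :
  exists (phi : nat -> nat) (rho : nat -> R), (forall k, phi k < phi k.+1)%N /\
    forall k i, (i < t)%N -> mpow m k (U (phi k) i - rho i).
Proof.
elim: t => [|t [phi [rho [Hphi Hrho]]]].
  by exists id, (fun _ => 0); split.
have [psi [r [Hpsi Hr]]] := subseq_conv (fun k => U (phi k) t).
exists (fun k => phi (psi k)), (fun i => if i == t then r else rho i); split.
  by move=> k; apply: incr_mono => //.
move=> k i; rewrite ltnS leq_eqVlt => /orP [/eqP ->|lt]; first by rewrite eqxx.
have -> : (i == t) = false by apply/negbTE; rewrite ltn_eqF.
apply: (mpow_le (e := psi k)); first exact: incr_ge.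
exact: Hrho.
Qed.

Lemma reps e : exists K (rep : 'I_K -> R), forall x, exists j, mpow m e (x - rep j).
Proof.
case: Hc => [cov _].
apply: (cov R (fun r y => mpow m e (y - r))).
- by move=> r; apply: open_ball.
- by move=> x; exists x; rewrite subrr; apply: mpow0.
Qed.

End Compact.


Section Noeth.
Variable R : nzRingType.

Lemma acc_fg (Ideal : (R -> Prop) -> Prop) (span : seq R -> R -> Prop) (J : R -> Prop) :
  (forall I : nat -> R -> Prop, (forall n, Ideal (I n)) -> (forall n x, I n x -> I n.+1 x) ->
     exists N, forall n x, (N <= n)%N -> I n x -> I N x) ->
  (forall l, Ideal (span l)) ->
  (forall l a x, span l x -> span (rcons l a) x) ->
  (forall l a, span (rcons l a) a) ->
  exists l : seq R, (forall t, (t < size l)%N -> J l`_t) /\ forall x, J x -> span l x.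
Proof.
move=> acc Isp Smono Sa; apply: NNPP => H.
have H1 : forall l, (forall t, (t < size l)%N -> J l`_t) -> exists a, J a /\ ~ span l a.
  move=> l Hl; apply: NNPP => H2; apply: H; exists l; split=> // x Jx.
  by apply: NNPP => H3; apply: H2; exists x.
pose nxt l := epsilon (inhabits (0 : R)) (fun a => J a /\ ~ span l a).
pose L := fix L n := if n is n'.+1 then rcons (L n') (nxt (L n')) else [::].
have HL : forall n t, (t < size (L n))%N -> J (L n)`_t.
  elim=> [|n IH] t //=; rewrite size_rcons nth_rcons ltnS leq_eqVlt.
  case/orP=> [/eqP ->|lt]; first rewrite ltnn eqxx.
    by case: (epsilon_spec (inhabits (0 : R)) _ (H1 _ IH)).
  by rewrite lt; apply: IH.
have [N HN] := acc (fun n => span (L n)) (fun n => Isp _) (fun n x => Smono _ _ x).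
have hN := HN N.+1 (nxt (L N)) (leqnSn N) (Sa _ _).
by case: (epsilon_spec (inhabits (0 : R)) _ (H1 _ (HL N))).
Qed.

Definition spanL (l : seq R) x := exists c : nat -> R, x = \sum_(t < size l) c t * l`_t.
Definition spanR (l : seq R) x := exists c : nat -> R, x = \sum_(t < size l) l`_t * c t.

Lemma left_fg (J : R -> Prop) : noetherian R -> left_ideal J ->
  exists l : seq R, (forall t, (t < size l)%N -> J l`_t) /\ forall x, J x -> spanL l x.
Proof.
move=> [acc _] _; apply: (acc_fg (Ideal := @left_ideal R)) => //.
- move=> l; split.
  + by exists (fun _ => 0); rewrite big1 // => t _; rewrite mul0r.
  + move=> x y [c ->] [d ->]; exists (fun t => c t + d t).
    by rewrite -big_split; apply: eq_bigr => t _; rewrite mulrDl.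
  + move=> r x [c ->]; exists (fun t => r * c t).
    by rewrite mulr_sumr; apply: eq_bigr => t _; rewrite mulrA.
- move=> l a x [c ->]; exists (fun t => if (t < size l)%N then c t else 0).
  rewrite size_rcons big_ord_recr /= ltnn mul0r addr0.
  by apply: eq_bigr => t _; rewrite ltn_ord nth_rcons ltn_ord.
- move=> l a; exists (fun t => (t == size l)%:R).
  rewrite size_rcons big_ord_recr /= eqxx mul1r nth_rcons ltnn eqxx big1 ?add0r //.
  by move=> t _; rewrite ltn_eqF // mul0r.
Qed.

Lemma right_fg (J : R -> Prop) : noetherian R -> right_ideal J ->
  exists l : seq R, (forall t, (t < size l)%N -> J l`_t) /\ forall x, J x -> spanR l x.
Proof.
move=> [_ acc] _; apply: (acc_fg (Ideal := @right_ideal R)) => //.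
- move=> l; split.
  + by exists (fun _ => 0); rewrite big1 // => t _; rewrite mulr0.
  + move=> x y [c ->] [d ->]; exists (fun t => c t + d t).
    by rewrite -big_split; apply: eq_bigr => t _; rewrite mulrDr.
  + move=> r x [c ->]; exists (fun t => c t * r).
    by rewrite mulr_suml; apply: eq_bigr => t _; rewrite mulrA.
- move=> l a x [c ->]; exists (fun t => if (t < size l)%N then c t else 0).
  rewrite size_rcons big_ord_recr /= ltnn mulr0 addr0.
  by apply: eq_bigr => t _; rewrite ltn_ord nth_rcons ltn_ord.
- move=> l a; exists (fun t => (t == size l)%:R).
  rewrite size_rcons big_ord_recr /= eqxx mulr1 nth_rcons ltnn eqxx big1 ?add0r //.
  by move=> t _; rewrite ltn_eqF // mulr0.
Qed.

End Noeth.

Section VecFG.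
Variable R : nzRingType.
Hypothesis HN : noetherian R.
Local Notation vec := (nat -> R).
Local Notation v0 := (fun _ : nat => (0 : R)).

Definition submod (L : vec -> Prop) :=
  [/\ L v0, forall v w, L v -> L w -> L (fun i => v i + w i) &
      forall r v, L v -> L (fun i => r * v i)].

Lemma submod_sum L n (c : nat -> R) (F : nat -> vec) : submod L ->
  (forall t, (t < n)%N -> L (F t)) -> L (fun i => \sum_(t < n) c t * F t i).
Proof.
move=> [L0 LD LZ]; elim: n => [|n IH] HF.
  by have -> : (fun i => \sum_(t < 0) c t * F t i) = v0
    by apply: functional_extensionality => i; rewrite big_ord0.
have -> : (fun i => \sum_(t < n.+1) c t * F t i) =
          (fun i => (fun i => \sum_(t < n) c t * F t i) i + (fun i => c n * F n i) i).
  by apply: functional_extensionality => i; rewrite big_ord_recr.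
apply: LD; first by apply: IH => t lt; apply: HF; apply: ltnW.
by apply: LZ; apply: HF.
Qed.

Lemma vec_fg s (L : vec -> Prop) : submod L ->
  exists Lam : seq vec, (forall t, (t < size Lam)%N -> L (nth v0 Lam t)) /\
    forall v, L v -> exists c : nat -> R, forall i, (i < s)%N ->
      v i = \sum_(t < size Lam) c t * nth v0 Lam t i.
Proof.
elim: s L => [|s IH] L HL.
  by exists [::]; split=> // v _; exists (fun _ => 0).
have [L0 LD LZ] := HL.
pose J := fun a => exists v, L v /\ v s = a.
have HJ : left_ideal J.
  split.
  - by exists v0.
  - by move=> x y [v [Lv <-]] [w [Lw <-]]; exists (fun i => v i + w i); split=> //; apply: LD.
  - by move=> r x [v [Lv <-]]; exists (fun i => r * v i); split=> //; apply: LZ.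
have [l [Hl Hsp]] := left_fg HN HJ.
have [lift Hlift] : exists lift : nat -> vec, forall t, (t < size l)%N -> L (lift t) /\ lift t s = l`_t.
  apply: (choicef (P := fun t v => (t < size l)%N -> L v /\ v s = l`_t)) => t.
  case: (ltnP t (size l)) => [lt|ge]; last by exists v0.
  by have [v [Lv vs]] := Hl t lt; exists v.
pose K := fun v => L v /\ v s = 0.
have HK : submod K.
  split.
  - by split.
  - by move=> v w [Lv vs] [Lw ws]; split; [apply: LD | rewrite vs ws addr0].
  - by move=> r v [Lv vs]; split; [apply: LZ | rewrite vs mulr0].
have [Lam2 [HLam2 Hsp2]] := IH K HK.
exists (mkseq lift (size l) ++ Lam2); split.
  move=> t; rewrite size_cat size_mkseq nth_cat size_mkseq.
  case: ifP => [lt _|ge lt]; first by rewrite nth_mkseq //; case: (Hlift t lt).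
  by case: (HLam2 (t - size l)%N); first lia.
move=> v Lv.
have [c Hc] := Hsp (v s) (ex_intro _ v (conj Lv erefl)).
pose w := fun i => v i + (-1) * \sum_(t < size l) c t * lift t i.
have Kw : K w.
  split.
    apply: (LD v (fun i => (-1) * \sum_(t < size l) c t * lift t i)) => //.
    apply: (LZ (-1) (fun i => \sum_(t < size l) c t * lift t i)).
    apply: (@submod_sum L (size l) c lift HL) => t lt.
    by case: (Hlift t lt).
  rewrite /w Hc mulN1r; apply/eqP; rewrite subr_eq0; apply/eqP; apply: eq_bigr => t _.
  by case: (Hlift t (ltn_ord t)) => _ ->.
have [c2 Hc2] := Hsp2 w Kw.
exists (fun t => if (t < size l)%N then c t else c2 (t - size l)%N) => i lti.
have -> : size (mkseq lift (size l) ++ Lam2) = (size l + size Lam2)%N.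
  by rewrite size_cat size_mkseq.
rewrite big_split_ord /=.
have -> : v i = \sum_(t < size l) c t * lift t i + w i.
  by rewrite /w mulN1r addrC subrK.
congr (_ + _).
  apply: eq_bigr => t _; rewrite ltn_ord nth_cat size_mkseq ltn_ord nth_mkseq //.
have -> : w i = \sum_(t < size Lam2) c2 t * nth v0 Lam2 t i.
  move: lti; rewrite ltnS leq_eqVlt => /orP [/eqP ->|lt]; last exact: Hc2.
  have := Kw => -[_ ->]; rewrite big1 // => t _.
  by case: (HLam2 t (ltn_ord t)) => _ ->; rewrite mulr0.
apply: eq_bigr => t _.
have -> : (size l + t < size l)%N = false by apply/negbTE; lia.
by rewrite nth_cat size_mkseq ifF ?addKn //; apply/negbTE; lia.
Qed.

End VecFG.


Section Main.
Variable R : nzRingType.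
Variable m : R -> Prop.
Hypothesis Hm : two_sided_ideal m.
Hypothesis HN : noetherian R.
Hypothesis Hc : madic_compact m.
Variable sigma : {rmorphism R -> R}.
Variable delta : R -> R.
Hypothesis Hsig : forall x, m x -> m (sigma x).
Hypothesis Hder : sigma_derivation sigma delta.
Hypothesis Hd1 : forall r, m (delta r).
Hypothesis Hd2 : forall r, m r -> mpow m 2 (delta r).
Variable M : zmodType.
Variable act : series R -> M -> M.
Hypothesis Hact : skew_A_module m sigma delta act.
Variable s : nat.
Variable gen : 'I_s -> M.
Hypothesis Hgen : forall x, exists c : 'I_s -> R, x = \sum_(i < s) act (cst (c i)) (gen i).

Local Notation sk := (skew_coef sigma delta).

Definition pi (c : nat -> R) := \sum_(j < s) act (cst (c j)) (gen j).
Definition MM e y := exists c : nat -> R, (forall j, mpow m e (c j)) /\ y = pi c.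

Lemma act_cst0 x : act (cst 0) x = 0.
Proof. by rewrite -(act_zero Hact x); apply: act_ext => k; rewrite /cst; case: (k == 0%N). Qed.

Lemma act_cstD a b x : act (cst (a + b)) x = act (cst a) x + act (cst b) x.
Proof.
rewrite -(act_add Hact); apply: act_ext => k; rewrite /cst /series_add.
by case: (k == 0%N); rewrite ?addr0.
Qed.

Lemma act_cstN a x : act (cst (- a)) x = - act (cst a) x.
Proof.
by apply: (@addrI _ (act (cst a) x)); rewrite [RHS]subrr -act_cstD subrr act_cst0.
Qed.

Lemma piD c d : pi (fun j => c j + d j) = pi c + pi d.
Proof. by rewrite /pi -big_split; apply: eq_bigr => j _; rewrite act_cstD. Qed.
Lemma piN c : pi (fun j => - c j) = - pi c.
Proof. by rewrite /pi -sumrN; apply: eq_bigr => j _; rewrite act_cstN. Qed.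
Lemma pi0 : pi (fun _ => 0) = 0.
Proof. by rewrite /pi big1 // => j _; rewrite act_cst0. Qed.
Lemma piZ r c : pi (fun j => r * c j) = act (cst r) (pi c).
Proof.
rewrite /pi (act_sum Hact); apply: eq_bigr => j _.
by rewrite (act_cst_cst Hact).
Qed.

Lemma MM0 e : MM e 0.
Proof. by exists (fun _ => 0); split; [move=> _; apply: mpow0 | rewrite pi0]. Qed.
Lemma MMD e x y : MM e x -> MM e y -> MM e (x + y).
Proof.
move=> [c [hc ->]] [d [hd ->]]; exists (fun j => c j + d j); split; last by rewrite piD.
by move=> j; apply: mpowD.
Qed.
Lemma MMN e x : MM e x -> MM e (- x).
Proof.
move=> [c [hc ->]]; exists (fun j => - c j); split; last by rewrite piN.
by move=> j; apply: (mpowN Hm).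
Qed.
Lemma MMB e x y : MM e x -> MM e y -> MM e (x - y).
Proof. by move=> hx hy; apply: MMD => //; apply: MMN. Qed.
Lemma MM_sum e (I : Type) (r : seq I) (P : pred I) (F : I -> M) :
  (forall i, P i -> MM e (F i)) -> MM e (\sum_(i <- r | P i) F i).
Proof.
move=> H; elim: r => [|i r IH]; first by rewrite big_nil; apply: MM0.
by rewrite big_cons; case: ifP => Pi //; apply: MMD => //; apply: H.
Qed.
Lemma MM_le e e' y : (e' <= e)%N -> MM e y -> MM e' y.
Proof. by move=> le [c [hc ->]]; exists c; split=> // j; apply: (mpow_le le). Qed.

Lemma MM_all y : MM 0 y.
Proof.
have [c ->] := Hgen y.
exists (fun i => if insub i is Some j then c j else 0); split=> // .
by apply: eq_bigr => j _; rewrite valK.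
Qed.

Lemma MM_cst e a y : mpow m e a -> MM e (act (cst a) y).
Proof.
move=> ha; have [c [_ ->]] := MM_all y.
rewrite -piZ; exists (fun j => a * c j); split=> // j.
exact: mpow_mulr.
Qed.

Lemma MM_cst' e r y : MM e y -> MM e (act (cst r) y).
Proof.
move=> [c [hc ->]]; rewrite -piZ; exists (fun j => r * c j); split=> // j.
exact: (mpow_mull Hm).
Qed.


Let skm := sk_mpow Hm Hsig Hder Hd1 Hd2.

Lemma pp_right_cst g c N k :
  partial_prod sigma delta g (cst c) N k = \sum_(n < N) g n * sk n k c.
Proof.
rewrite /partial_prod big_ord_recl /= subn0 [X in _ + X]big1 ?addr0 // => i _.
by rewrite big1 // => n _; rewrite /cst /= (sk0 Hder) mulr0.
Qed.

Lemma prod_cst g c : exists h : series R,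
  (forall x, act h x = act g (act (cst c) x)) /\
  (forall e, mpow m e c -> forall k, mpow m e (h k)).
Proof.
have Hconv : forall k, exists L, forall e, exists N0, forall N, (N0 <= N)%N ->
    mpow m e (L - \sum_(n < N) g n * sk n k c).
  move=> k; apply: (complete Hm Hc) => e; exists (e + k)%N => N N' le le'.
  rewrite -!(big_mkord (fun _ => true) (fun n => g n * sk n k c)) (@big_cat_nat _ _ _ N 0 N' _ _ (leq0n N) le') /= addrAC subrr add0r.
  rewrite big_nat_cond; apply: mpow_sumP => n /andP [/andP [le1 _] _].
  apply: (mpow_mull Hm); apply: (mpow_le (e := (0 + (n - k))%N)); first lia.
  exact: skm.
have [h Hh] := choicef Hconv.
exists h; split.
  move=> x; apply: (act_prod Hact) => j e; have [N0 HN0] := Hh j e.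
  by exists N0 => N le; rewrite pp_right_cst; apply: HN0.
move=> e hc k; have [N0 HN0] := Hh k e.
have H := HN0 N0 (leqnn _).
rewrite -[h k](subrK (\sum_(n < N0) g n * sk n k c)); apply: mpowD => //.
apply: mpow_sum => n; apply: (mpow_mull Hm).
by apply: (mpow_le (e := (e + (n - k))%N)); [lia | apply: skm].
Qed.

Lemma act_lin (n : nat) (a : nat -> R) (H : nat -> series R) x :
  act (fun k => \sum_(t < n) a t * H t k) x = \sum_(t < n) act (cst (a t)) (act (H t) x).
Proof.
elim: n => [|n IH].
  rewrite big_ord0 -(act_zero Hact x); apply: act_ext => k; exact: big_ord0.
rewrite big_ord_recr /= -IH -(act_cst Hact) -(act_add Hact); apply: act_ext => k.
by rewrite /series_add big_ord_recr.
Qed.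

Lemma MM_series e h w : (forall k, mpow m e (h k)) -> MM e (act h w).
Proof.
move=> hh.
have HJ : right_ideal (mpow m e).
  split; [exact: mpow0 | exact: mpowD | by move=> r x; apply: mpow_mulr].
have [l [Hl Hsp]] := right_fg HN HJ.
have [rho Hrho] := choicef (fun k => Hsp (h k) (hh k)).
rewrite (act_ext _ (g := fun k => \sum_(t < size l) l`_t * rho k t)) //.
rewrite (act_lin (size l) (fun t => l`_t) (fun t k => rho k t)).
by apply: MM_sum => t _; apply: MM_cst; apply: Hl.
Qed.

Lemma MM_act e g y : MM e y -> MM e (act g y).
Proof.
move=> [c [hc ->]]; rewrite /pi (act_sum Hact); apply: MM_sum => j _.
have [h [Hh1 Hh2]] := prod_cst g (c j).
by rewrite -Hh1; apply: MM_series; apply: Hh2.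
Qed.


Lemma rep_mod e : exists K (rep : 'I_K -> R), forall y, exists phi : {ffun 'I_s -> 'I_K},
  MM e (y - \sum_(j < s) act (cst (rep (phi j))) (gen j)).
Proof.
have [K [rep Hrep]] := reps Hc e.
exists K, rep => y; have [c ->] := Hgen y.
have [f Hf] := choicef (fun j : 'I_s => Hrep (c j)).
exists [ffun j => f j]; rewrite -sumrB; apply: MM_sum => j _.
by rewrite ffunE -act_cstN -act_cstD; apply: MM_cst.
Qed.

Lemma geom e p u : (0 < p)%N -> MM e (u - act (e_ R p) u) -> MM e u.
Proof.
move=> p0 H.
pose G : series R := fun k => (p %| k)%:R.
have HG : forall z, act G z = z + act G (act (e_ R p) z).
  move=> z; rewrite -(act_shift Hder Hact) -{2}(act1 Hact z) -(act_add Hact).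
  apply: act_ext => k; rewrite /series_add /G /cst.
  case: k => [|k].
    by rewrite dvdn0 eqxx leqNgt p0 addr0.
  rewrite add0r /=; case: leqP => le.
    by rewrite -{1}(subnK le) dvdn_addl ?dvdnn.
  by have -> : (p %| k.+1)%N = false by apply/negbTE; rewrite gtnNdvd.
have -> : u = act G (u - act (e_ R p) u) by rewrite (actB Hact) HG addrK.
exact: MM_act.
Qed.

Lemma pigeon e x : exists a, MM e (act (e_ R a) x).
Proof.
have [K [rep Hr]] := rep_mod e.
have [t Ht] := choicef (fun n => Hr (act (e_ R n) x)).
pose F := {ffun 'I_s -> 'I_K}.
pose f := fun i : 'I_(#|{: F}|.+1) => t i.
have [i [j [ij fij]]] : exists i j, i <> j /\ f i = f j.
  apply: NNPP => H; have inj : injective f.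
    move=> i j fij; apply: NNPP => ij; apply: H; exists i, j; split.
    - exact: ij.
    - exact: fij.
  by have := leq_card f inj; rewrite card_ord ltnn.
have key : forall a b, (a < b)%N -> t a = t b -> exists a, MM e (act (e_ R a) x).
  move=> a b ab tab; exists a; apply: (geom (p := (b - a)%N)); first lia.
  rewrite -(act_ee Hder Hact) subnK; last exact: ltnW.
  have := MMB (Ht a) (Ht b); rewrite tab.
  by rewrite opprB addrA subrK.
case: (ltngtP i j) => [lt|gt|eq].
- exact: key lt fij.
- exact: (key _ _ gt (esym fij)).
- by exfalso; apply: ij; apply: val_inj.
Qed.

Lemma pigeon_all e x : exists a, forall n, (a <= n)%N -> MM e (act (e_ R n) x).
Proof.
have [a Ha] := pigeon e x; exists a => n le.
by rewrite -(subnK le) (act_ee Hder Hact); apply: MM_act.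
Qed.

Lemma nilp e : exists n, forall x, MM e (act (e_ R n) x).
Proof.
have [a Ha] := choicef (fun j : 'I_s => pigeon_all e (gen j)).
pose A := (\max_(j < s) a j)%N.
exists (A + e)%N => x; have [c ->] := Hgen x.
rewrite (act_sum Hact); apply: MM_sum => j _.
rewrite (act_e_cst_sum Hder Hact); apply: MM_sum => i _.
case: (leqP A i) => [le|lt].
  apply: MM_cst'; apply: Ha; apply: leq_trans le.
  exact: (leq_bigmax_cond (F := a)).
apply: MM_cst; apply: (mpow_le (e := (0 + (A + e - i))%N)); first lia.
exact: skm.
Qed.


Lemma pi_ext c d : (forall i, (i < s)%N -> c i = d i) -> pi c = pi d.
Proof. by move=> H; apply: eq_bigr => j _; rewrite H. Qed.

Lemma closure (N : M -> Prop) : N 0 -> (forall x y, N x -> N y -> N (x + y)) ->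
  (forall r y, N y -> N (act (cst r) y)) ->
  forall z, (forall e, exists y, N y /\ MM e (z - y)) -> N z.
Proof.
move=> N0 ND NZ z Hz.
pose L := fun c => N (pi c).
have HL : submod L.
  split; rewrite /L.
  - by rewrite pi0.
  - by move=> v w Lv Lw; rewrite piD; apply: ND.
  - by move=> r v Lv; rewrite piZ; apply: NZ.
have [Lam [HLam Hsp]] := vec_fg HN s HL.
have [zeta Hzeta] := MM_all z.
case: Hzeta => _ Hzeta.
pose T := size Lam.
pose lam := nth (fun _ : nat => (0 : R)) Lam.
have Hwr : forall e, exists wr : (nat -> R) * (nat -> R),
    (forall j, mpow m e (wr.1 j)) /\
    forall i, (i < s)%N -> zeta i - wr.1 i = \sum_(t < T) wr.2 t * lam t i.
  move=> e; have [y [Ny [c [hc Hc']]]] := Hz e.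
  have Ly : L (fun i => zeta i + - c i).
    rewrite /L piD piN -Hzeta -Hc' opprB addrC subrK; exact: Ny.
  have [r Hr] := Hsp _ Ly.
  by exists (c, r); split.
have [WR HWR] := choicef Hwr.
have [phi [rho [Hphi Hrho]]] := tych Hc (fun e t => (WR e).2 t) T.
have Hi : forall i, (i < s)%N -> zeta i = \sum_(t < T) rho t * lam t i.
  move=> i lti; apply/eqP; rewrite -subr_eq0; apply/eqP; apply: (hausdorff Hc) => k.
  have [Hw Hr] := HWR (phi k).
  have -> : zeta i - \sum_(t < T) rho t * lam t i =
            (WR (phi k)).1 i + \sum_(t < T) ((WR (phi k)).2 t - rho t) * lam t i.
    rewrite [X in _ = _ + X](eq_bigr (fun t : 'I_T => (WR (phi k)).2 t * lam t i - rho t * lam t i)); last first.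
      by move=> t _; rewrite mulrBl.
    by rewrite sumrB -(Hr i lti) addrA [_.1 i + _]addrC subrK.
  apply: mpowD.
    by apply: (mpow_le (incr_ge Hphi k)); apply: Hw.
  by apply: mpow_sum => t; apply: mpow_mulr; apply: Hrho.
rewrite Hzeta (pi_ext Hi).
apply: (@submod_sum _ L T rho lam HL) => t lt.
exact: HLam.
Qed.


Lemma part1 (N : M -> Prop) : B_submodule act N -> A_submodule act N.
Proof.
move=> [N0 ND NP]; split=> // f x _ Nx.
apply: closure => //.
  by move=> r y Ny; apply: NP => //; apply: cst_poly.
move=> e; have [n Hn] := nilp e.
exists (act (trunc f n) x); split; first by apply: NP => //; apply: trunc_poly.
rewrite (act_split Hder Hact f n x) addrC addKr.
exact: MM_act.
Qed.

End Main.


Theorem mainTheorem11 (R : nzRingType) (m : R -> Prop)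
  (sigma : {rmorphism R -> R}) (delta : R -> R)
  (M : zmodType) (act : series R -> M -> M) :
  local_with_max_ideal m -> noetherian R -> madic_compact m ->
  bijective sigma -> (forall x, m (sigma x) <-> m x) ->
  sigma_derivation sigma delta ->
  (forall r, m (delta r)) -> (forall r, m r -> mpow m 2 (delta r)) ->
  skew_A_module m sigma delta act -> fg_over_A act -> fg_over_R act ->
  (forall N : M -> Prop, B_submodule act N -> A_submodule act N) /\
  (forall (Q : zmodType) (actQ : series R -> Q -> Q) (phi : M -> Q),
     skew_B_module m sigma delta actQ ->
     (forall x y, phi (x + y) = phi x + phi y) -> (forall q, exists x, phi x = q) ->
     (forall (f : series R) x, polynomial_series f -> phi (act f x) = actQ f (phi x)) ->
     exists actQ' : series R -> Q -> Q,
       [/\ skew_A_module m sigma delta actQ',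
           forall (f : series R) y, polynomial_series f -> actQ' f y = actQ f y &
           forall f x, phi (act f x) = actQ' f (phi x)]).
Proof.
move=> [Hm _ _] HN Hc _ Hsigiff Hder Hd1 Hd2 Hact _ [s [gen Hgen]].
have Hsig : forall x, m x -> m (sigma x) by move=> x /Hsigiff.
have P1 := part1 Hm HN Hc Hsig Hder Hd1 Hd2 Hact Hgen.
split; first exact: P1.
move=> Q actQ phi HB HphiD Hsurj Hcompat.
have phi0 : phi 0 = 0 by apply: (@addrI _ (phi 0)); rewrite -HphiD !addr0.
have phiN : forall x, phi (- x) = - phi x.
  by move=> x; apply: (@addrI _ (phi x)); rewrite -HphiD !subrr.
have phiB : forall x y, phi (x - y) = phi x - phi y by move=> x y; rewrite HphiD phiN.
have actQ0 : forall f, polynomial_series f -> actQ f 0 = 0.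
  move=> f pf; case: HB => HD _ _ _.
  by apply: (@addrI _ (actQ f 0)); rewrite -HD // !addr0.
have Hker : A_submodule act (fun x => phi x = 0).
  apply: P1; split=> //.
  - by move=> x y hx hy; rewrite HphiD hx hy addr0.
  - by move=> f x pf hx; rewrite Hcompat // hx actQ0.
case: Hker => _ _ Hker.
have wd : forall f x y, phi x = phi y -> phi (act f x) = phi (act f y).
  move=> f x y hxy; apply/eqP; rewrite -subr_eq0 -phiB -(actB Hact); apply/eqP.
  by apply: Hker => //; rewrite phiB hxy subrr.
have [sec Hsec] := choicef Hsurj.
pose actQ' := fun f q => phi (act f (sec q)).
have Hmain : forall f x, phi (act f x) = actQ' f (phi x).
  by move=> f x; rewrite /actQ'; apply: wd; rewrite Hsec.
exists actQ'; split.
- split.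
  + move=> f q1 q2 _; rewrite -(Hsec q1) -(Hsec q2) -HphiD -!Hmain.
    by rewrite (actD Hact) HphiD.
  + by move=> f g q _ _; rewrite -(Hsec q) -!Hmain (act_add Hact) HphiD.
  + by move=> q; rewrite -(Hsec q) -Hmain (act1 Hact).
  + move=> f g h q _ _ _ Hp; rewrite -(Hsec q) -!Hmain.
    by rewrite (act_prod Hact _ Hp).
- by move=> f y pf; rewrite /actQ' Hcompat // Hsec.
- exact: Hmain.
Qed.
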